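(* $$D_{\mathbb{R},2}\ge D_{\mathbb{R},2}(\ell_\infty^2)=\sup\left\{\left[2t^{4/3}+\left(2\sqrt{t(1-t)}\right)^{4/3}\right]^{3/4}: t\in[1/2,1]\right\}\approx1.8374.$$
   Context: $\ell_\infty^n$ is $\mathbb{R}^n$ with the sup norm; for a polynomial $P$ on $\ell_\infty^n$, $\|P\|=\sup_{x\in[-1,1]^n}|P(x)|$. For $P(x)=\sum_{|\alpha|=m}a_\alpha x^\alpha$ an $m$-homogeneous polynomial, write $\|P\|_{\mathrm{coef}}=\big(\sum_{|\alpha|=m}|a_\alpha|^{\frac{2m}{m+1}}\big)^{\frac{m+1}{2m}}$. $D_{\mathbb{R},m}(\ell_\infty^n)=\sup\{\|P\|_{\mathrm{coef}}/\|P\|: P\neq0 \text{ real $m$-homogeneous on }\ell_\infty^n\}$, and $D_{\mathbb{R},m}=\sup_n D_{\mathbb{R},m}(\ell_\infty^n)$ is the optimal constant in the real polynomial Bohnenblust–Hille inequality $\|P\|_{\mathrm{coef}}\le D\|P\|$. *)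

(* Defs.v *)
From Stdlib Require Import Reals Lra List.
Import ListNotations.
Open Scope R_scope.

(* real power for x >= 0 (0^y := 0); Rpower alone would give Rpower 0 y = 1 *)
Definition rpow (x y : R) : R := if Rlt_dec 0 x then Rpower x y else 0.

(* all multi-indices alpha in N^n with |alpha| = m, as lists of length n *)
Fixpoint mindices (n m : nat) : list (list nat) :=
  match n with
  | O => match m with O => [[]] | S _ => [] end
  | S n' => flat_map (fun k => map (cons k) (mindices n' (m - k))) (seq 0 (S m))
  end.

Fixpoint monom (x : nat -> R) (al : list nat) (i : nat) : R :=
  match al with
  | [] => 1
  | k :: r => (x i ^ k) * monom x r (S i)
  end.

Definition hpoly_eval (n m : nat) (a : list nat -> R) (x : nat -> R) : R :=
  fold_right (fun al acc => a al * monom x al 0 + acc) 0 (mindices n m).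

Definition hpoly_nonzero (n m : nat) (a : list nat -> R) : Prop :=
  exists al, In al (mindices n m) /\ a al <> 0.

Definition hpoly_values (n m : nat) (a : list nat -> R) (r : R) : Prop :=
  exists x : nat -> R, (forall i, (i < n)%nat -> -1 <= x i <= 1) /\
                       r = Rabs (hpoly_eval n m a x).

Definition coef_norm (n m : nat) (a : list nat -> R) : R :=
  rpow (fold_right (fun al acc => rpow (Rabs (a al)) (2 * INR m / (INR m + 1)) + acc)
          0 (mindices n m))
       ((INR m + 1) / (2 * INR m)).

Definition BH_ratios (n m : nat) (r : R) : Prop :=
  exists a : list nat -> R, hpoly_nonzero n m a /\
    exists N, is_lub (hpoly_values n m a) N /\ r = coef_norm n m a / N.

Definition BH_fun (t : R) : R :=
  rpow (2 * rpow t (4/3) + rpow (2 * sqrt (t * (1 - t))) (4/3)) (3/4).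

(* Main.v *)
Require Import Defs.
From Stdlib Require Import Reals Lra Psatz List.
Import ListNotations.
Open Scope R_scope.

Lemma Rpower_pos' x y : 0 < Rpower x y.
Proof. unfold Rpower; apply exp_pos. Qed.

Lemma rpow_pos x y : 0 < x -> rpow x y = Rpower x y.
Proof. intro H; unfold rpow; destruct (Rlt_dec 0 x); [reflexivity|lra]. Qed.

Lemma rpow_0l y : rpow 0 y = 0.
Proof. unfold rpow; destruct (Rlt_dec 0 0); [lra|reflexivity]. Qed.

Lemma rpow_nonneg x y : 0 <= rpow x y.
Proof. unfold rpow; destruct (Rlt_dec 0 x); [left; apply Rpower_pos'|lra]. Qed.

Lemma rpow_posv x y : 0 < x -> 0 < rpow x y.
Proof. intro H; rewrite rpow_pos; auto; apply Rpower_pos'. Qed.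

Lemma rpow_1l y : rpow 1 y = 1.
Proof. rewrite rpow_pos by lra. unfold Rpower. rewrite ln_1, Rmult_0_r. apply exp_0. Qed.

Lemma Rpower_nat x y n : 0 < x -> Rpower (Rpower x y) (INR n) = Rpower x (y * INR n).
Proof. intros; apply Rpower_mult. Qed.

Lemma rpow_cube x : 0 <= x -> (rpow x (1/3))^3 = x.
Proof.
  intro H; destruct H as [H|H].
  - rewrite rpow_pos by auto. rewrite <- Rpower_pow by apply Rpower_pos'.
    rewrite Rpower_mult. replace (1/3 * INR 3) with 1 by (simpl; field). apply Rpower_1; auto.
  - subst. rewrite rpow_0l. ring.
Qed.

Lemma rpow_43 x : 0 <= x -> rpow x (4/3) = (rpow x (1/3))^4.
Proof.
  intro H; destruct H as [H|H].
  - rewrite !rpow_pos by auto. rewrite <- Rpower_pow by apply Rpower_pos'.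
    rewrite Rpower_mult. f_equal. simpl; field.
  - subst. rewrite !rpow_0l. ring.
Qed.

Lemma rpow_43_1 x : 0 <= x -> rpow x (4/3) = x * rpow x (1/3).
Proof. intro H. rewrite rpow_43 by auto. rewrite <- (rpow_cube x H) at 2. ring. Qed.

Lemma rpow_34 x : 0 <= x -> (rpow x (3/4))^4 = x^3.
Proof.
  intro H; destruct H as [H|H].
  - rewrite rpow_pos by auto. rewrite <- Rpower_pow by apply Rpower_pos'.
    rewrite Rpower_mult. rewrite <- Rpower_pow by auto. f_equal. simpl; field.
  - subst. rewrite rpow_0l. ring.
Qed.

Lemma rpow_comp x y z : 0 <= x -> y * z = 1 -> rpow (rpow x y) z = x.
Proof.
  intros H Hyz; destruct H as [H|H].
  - rewrite (rpow_pos x) by auto. rewrite rpow_pos by apply Rpower_pos'.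
    rewrite Rpower_mult, Hyz. apply Rpower_1; auto.
  - subst. rewrite !rpow_0l. reflexivity.
Qed.

Lemma rpow_mul x y z : 0 <= x -> 0 <= y -> rpow (x*y) z = rpow x z * rpow y z.
Proof.
  intros Hx Hy; destruct Hx as [Hx|Hx]; [destruct Hy as [Hy|Hy]|].
  - rewrite !rpow_pos by (auto; apply Rmult_lt_0_compat; auto).
    symmetry; apply Rpower_mult_distr; auto.
  - subst. rewrite Rmult_0_r, !rpow_0l. ring.
  - subst. rewrite Rmult_0_l, !rpow_0l. ring.
Qed.

Lemma rpow_le x y z : 0 <= z -> 0 <= x <= y -> rpow x z <= rpow y z.
Proof.
  intros Hz [Hx Hxy]. destruct Hx as [Hx|Hx].
  - rewrite !rpow_pos by lra. apply Rle_Rpower_l; lra.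
  - subst. rewrite rpow_0l. apply rpow_nonneg.
Qed.

Lemma cube_lt a b : 0 <= a -> a < b -> a^3 < b^3.
Proof. intros.
  replace (b^3) with (a^3 + (b-a)*(a*a+a*b+b*b)) by ring.
  assert (0 < (b-a)*(a*a+a*b+b*b)). { apply Rmult_lt_0_compat; nra. } lra. Qed.

Lemma cube_le a b : 0 <= a -> 0 <= b -> a^3 <= b^3 -> a <= b.
Proof. intros. destruct (Rle_lt_dec a b); auto. exfalso.
  assert (b^3 < a^3) by (apply cube_lt; auto). lra. Qed.

Lemma pow4_lt a b : 0 <= a -> 0 <= b -> a^4 < b^4 -> a < b.
Proof. intros. destruct (Rlt_le_dec a b); auto. exfalso.
  assert (b^4 <= a^4) by (apply pow_incr; lra). lra. Qed.

Lemma pow6_le a b : 0 <= a -> 0 <= b -> a^6 <= b^6 -> a <= b.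
Proof. intros. destruct (Rle_lt_dec a b); auto. exfalso.
  assert (H3 : b^3 < a^3) by (apply cube_lt; auto).
  assert (0 <= b^3) by (apply pow_le; auto).
  replace (a^6) with ((a^3)*(a^3)) in * by ring.
  replace (b^6) with ((b^3)*(b^3)) in * by ring. nra. Qed.

Lemma Rabs_le_inv x y : Rabs x <= y -> -y <= x <= y.
Proof. unfold Rabs; destruct (Rcase_abs x); lra. Qed.

Definition ff (t:R) := 2 * rpow t (4/3) + rpow (2 * sqrt (t * (1 - t))) (4/3).

Lemma powle x N : 0 <= x <= N -> rpow x (4/3) <= x * rpow N (1/3).
Proof. intros H. rewrite rpow_43_1 by lra. apply Rmult_le_compat_l; [lra|].
  apply rpow_le; lra. Qed.

Lemma sqrt_bound t g : 0 <= t <= 1 -> 0 <= g -> g*g <= 4*(t*(1-t)) -> g <= 2 * sqrt (t*(1-t)).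
Proof. intros. assert (0 <= t*(1-t)) by nra.
  pose proof (sqrt_sqrt _ H2). pose proof (sqrt_pos (t*(1-t))). nra. Qed.

Lemma norm_bound (M t g : R) : (forall t, 1/2 <= t <= 1 -> ff t <= M) ->
  0 <= t <= 1 -> 0 <= g -> g <= 2*t -> g*g <= 4*(t*(1-t)) ->
  2 * rpow t (4/3) + rpow g (4/3) <= M.
Proof.
  intros Hf Ht Hg Hg1 Hg2.
  destruct (Rle_lt_dec (1/2) t).
  - apply Rle_trans with (ff t); [|apply Hf; lra]. unfold ff.
    apply Rplus_le_compat_l. apply rpow_le; [lra|]. split; auto. apply sqrt_bound; auto.
  - apply Rle_trans with (ff (1/2)); [|apply Hf; lra]. unfold ff.
    replace (2 * sqrt (1/2*(1-1/2))) with 1.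
    2:{ replace (1/2*(1-1/2)) with ((1/2)*(1/2)) by field. rewrite sqrt_square; lra. }
    rewrite rpow_1l.
    assert (rpow g (4/3) <= rpow 2 (4/3) * rpow t (4/3)).
    { rewrite <- rpow_mul by lra. apply rpow_le; lra. }
    assert (rpow t (4/3) <= rpow (1/2) (4/3)) by (apply rpow_le; lra).
    assert (rpow 2 (4/3) * rpow (1/2) (4/3) = 1).
    { rewrite <- rpow_mul by lra. replace (2*(1/2)) with 1 by field. apply rpow_1l. }
    pose proof (rpow_nonneg 2 (4/3)). nra.
Qed.

Lemma core0 (M a b c N : R) : (forall t, 1/2 <= t <= 1 -> ff t <= M) -> 2 <= M ->
  0 <= a -> 0 <= c -> Rabs b <= a ->
  (forall u v, -1 <= u <= 1 -> -1 <= v <= 1 -> Rabs (a*u^2 + b*v^2 + c*u*v) <= N) ->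
  rpow a (4/3) + rpow (Rabs b) (4/3) + rpow c (4/3) <= M * rpow N (4/3).
Proof.
  intros Hf HM Ha Hc Hb H.
  assert (HN : 0 <= N). { specialize (H 0 0). apply Rle_trans with (2:=H ltac:(lra) ltac:(lra)). apply Rabs_pos. }
  pose proof (rpow_nonneg N (1/3)) as Hnu.
  assert (HNp : rpow N (4/3) = N * rpow N (1/3)) by (apply rpow_43_1; auto).
  pose proof (H 1 1 ltac:(lra) ltac:(lra)) as H11.
  pose proof (H 1 0 ltac:(lra) ltac:(lra)) as H10.
  replace (a*1^2+b*1^2+c*1*1) with (a+b+c) in H11 by ring.
  replace (a*1^2+b*0^2+c*1*0) with a in H10 by ring.
  apply Rabs_le_inv in H11. apply Rabs_le_inv in H10.
  destruct (Rle_lt_dec 0 b) as [Hb0|Hb0].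
  - rewrite Rabs_pos_eq by auto.
    pose proof (powle a N ltac:(lra)). pose proof (powle b N ltac:(lra)).
    pose proof (powle c N ltac:(lra)). rewrite HNp.
    assert ((a+b+c) * rpow N (1/3) <= N * rpow N (1/3)) by (apply Rmult_le_compat_r; lra).
    assert (0 <= N * rpow N (1/3)) by nra. nra.
  - rewrite Rabs_left by auto. rewrite Rabs_left in Hb by auto.
    set (be := - b) in *. assert (Hbdef : be = - b) by reflexivity. clearbody be.
    destruct (Rle_lt_dec (2*be) c) as [Hc2|Hc2].
    + pose proof (powle a N ltac:(lra)). pose proof (powle be N ltac:(lra)).
      pose proof (powle c N ltac:(lra)). rewrite HNp.
      assert ((a+be+c) * rpow N (1/3) <= 2*N * rpow N (1/3)) by (apply Rmult_le_compat_r; lra).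
      assert (0 <= N * rpow N (1/3)) by nra. nra.
    + assert (Hbe : 0 < be) by lra.
      assert (Hv := H 1 (c/(2*be)) ltac:(lra)).
      assert (Hv1 : -1 <= c/(2*be) <= 1).
      { split.
        - apply Rle_trans with 0; [lra|]. apply Rmult_le_pos; [lra|left; apply Rinv_0_lt_compat; lra].
        - apply Rmult_le_reg_r with (2*be); [lra|]. replace (c/(2*be)*(2*be)) with c by (field; lra). lra. }
      specialize (Hv Hv1).
      replace (a * 1 ^ 2 + b * (c / (2 * be)) ^ 2 + c * 1 * (c / (2 * be))) with (a + c*c/(4*be)) in Hv
        by (rewrite Hbdef; field; lra).
      apply Rabs_le_inv in Hv.
      assert (Hcc : c*c <= 4*be*(N-a)).
      { assert (c*c/(4*be) <= N - a) by lra.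
        apply (Rmult_le_compat_r (4*be)) in H0; [|lra].
        replace (c*c/(4*be)*(4*be)) with (c*c) in H0 by (field; lra). lra. }
      assert (HNp0 : 0 < N) by nra.
      assert (rpow be (4/3) <= rpow a (4/3)) by (apply rpow_le; lra).
      set (t := a / N). set (g := c / N).
      assert (Ha' : a = t * N) by (unfold t; field; lra).
      assert (Hc' : c = g * N) by (unfold g; field; lra).
      assert (0 <= t <= 1).
      { unfold t; split; [apply Rmult_le_pos; [lra|left; apply Rinv_0_lt_compat; lra]|].
        apply Rmult_le_reg_r with N; [lra|]. field_simplify; lra. }
      assert (0 <= g) by (unfold g; apply Rmult_le_pos; [lra|left; apply Rinv_0_lt_compat; lra]).
      assert (Hn := norm_bound M t g Hf H1 H2).
      assert (g <= 2*t) by (apply Rmult_le_reg_r with N; [lra|]; nra).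
      assert (g*g <= 4*(t*(1-t))).
      { apply Rmult_le_reg_r with (N*N); [nra|]. nra. }
      specialize (Hn H3 H4).
      assert (E : 2 * rpow a (4/3) + rpow c (4/3) = (2 * rpow t (4/3) + rpow g (4/3)) * rpow N (4/3)).
      { rewrite Ha', Hc'. rewrite !rpow_mul by lra. ring. }
      pose proof (rpow_nonneg N (4/3)). nra.
Qed.

Lemma core1 (M a b c N : R) : (forall t, 1/2 <= t <= 1 -> ff t <= M) -> 2 <= M ->
  Rabs b <= Rabs a ->
  (forall u v, -1 <= u <= 1 -> -1 <= v <= 1 -> Rabs (a*u^2 + b*v^2 + c*u*v) <= N) ->
  rpow (Rabs a) (4/3) + rpow (Rabs b) (4/3) + rpow (Rabs c) (4/3) <= M * rpow N (4/3).
Proof.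
  intros Hf HM Hb H.
  destruct (Rle_lt_dec 0 a) as [Ha|Ha]; destruct (Rle_lt_dec 0 c) as [Hc|Hc].
  - rewrite (Rabs_pos_eq a), (Rabs_pos_eq c) by auto.
    rewrite (Rabs_pos_eq a) in Hb by auto. apply core0; auto.
  - rewrite (Rabs_pos_eq a), (Rabs_left c) by auto.
    rewrite (Rabs_pos_eq a) in Hb by auto. apply core0; auto; try lra.
    intros u v Hu Hv. specialize (H (-u) v ltac:(lra) Hv).
    replace (a*u^2+b*v^2+ - c*u*v) with (a*(-u)^2+b*v^2+c*(-u)*v) by ring. auto.
  - rewrite (Rabs_left a), (Rabs_pos_eq c) by auto.
    rewrite (Rabs_left a) in Hb by auto. rewrite <- (Rabs_Ropp b).
    apply core0; auto; try lra. rewrite Rabs_Ropp; auto.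
    intros u v Hu Hv. specialize (H (-u) v ltac:(lra) Hv).
    replace (- a*u^2+ - b*v^2+ c*u*v) with (-(a*(-u)^2+b*v^2+c*(-u)*v)) by ring.
    rewrite Rabs_Ropp; auto.
  - rewrite (Rabs_left a), (Rabs_left c) by auto.
    rewrite (Rabs_left a) in Hb by auto. rewrite <- (Rabs_Ropp b).
    apply core0; auto; try lra. rewrite Rabs_Ropp; auto.
    intros u v Hu Hv. specialize (H u v Hu Hv).
    replace (- a*u^2+ - b*v^2+ - c*u*v) with (-(a*u^2+b*v^2+c*u*v)) by ring.
    rewrite Rabs_Ropp; auto.
Qed.

Lemma core (M a b c N : R) : (forall t, 1/2 <= t <= 1 -> ff t <= M) -> 2 <= M ->
  (forall u v, -1 <= u <= 1 -> -1 <= v <= 1 -> Rabs (a*u^2 + b*v^2 + c*u*v) <= N) ->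
  rpow (Rabs a) (4/3) + rpow (Rabs b) (4/3) + rpow (Rabs c) (4/3) <= M * rpow N (4/3).
Proof.
  intros Hf HM H.
  destruct (Rle_lt_dec (Rabs b) (Rabs a)).
  - apply core1; auto.
  - assert (rpow (Rabs b) (4/3) + rpow (Rabs a) (4/3) + rpow (Rabs c) (4/3) <= M * rpow N (4/3)).
    { apply core1; auto; try lra. intros u v Hu Hv. specialize (H v u Hv Hu).
      replace (b*u^2+a*v^2+c*u*v) with (a*v^2+b*u^2+c*v*u) by ring. auto. }
    lra.
Qed.

Definition kk := 7714/10000.
Definition hh (u : R) := 2*u^4 + kk^2/3 + 8/(3*kk)*u^3*(1-u^3).

Lemma hh_bound u : 0 <= u <= 1 -> hh u <= 22505/10000.
Proof.
  intros Hu.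
  assert (E : 22505/10000 - hh u = (u - 95387/100000)^2 *
    ((13046926456680193361/5785500000000000000) + (341965022875603/72318750000000)*u
     + (7170179769/964250000)*u^2 + (381548/57855)*u^3 + (40000/11571)*u^4)
    + ((5726314124356587753728797/19285000000000000000000000000)
       + (-108200356991472974293/482125000000000000000000) * u)).
  { unfold hh, kk. field. }
  assert (0 <= (u - 95387/100000)^2) by (apply pow2_ge_0).
  assert (0 <= u^2) by (apply pow_le; lra).
  assert (0 <= u^3) by (apply pow_le; lra).
  assert (0 <= u^4) by (apply pow_le; lra).
  assert (0 <= (13046926456680193361/5785500000000000000) + (341965022875603/72318750000000)*u
     + (7170179769/964250000)*u^2 + (381548/57855)*u^3 + (40000/11571)*u^4) by lra.
  assert (0 <= (5726314124356587753728797/19285000000000000000000000000)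
       + (-108200356991472974293/482125000000000000000000) * u) by lra.
  assert (0 <= (u - 95387/100000)^2 *
    ((13046926456680193361/5785500000000000000) + (341965022875603/72318750000000)*u
     + (7170179769/964250000)*u^2 + (381548/57855)*u^3 + (40000/11571)*u^4)) by (apply Rmult_le_pos; auto).
  lra.
Qed.

Lemma ff_nonneg t : 0 <= ff t.
Proof. unfold ff. pose proof (rpow_nonneg t (4/3)). pose proof (rpow_nonneg (2 * sqrt (t * (1 - t))) (4/3)). lra. Qed.

Lemma ff_repr t : 0 <= t <= 1 -> exists u r, 0 <= u <= 1 /\ 0 <= r /\ u^3 = t /\
   (r^2)^3 = 4*(t*(1-t)) /\ ff t = 2*u^4 + r^4.
Proof.
  intros Ht.
  set (u := rpow t (1/3)).
  assert (Hu3 : u^3 = t) by (apply rpow_cube; lra).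
  assert (Hu0 : 0 <= u) by apply rpow_nonneg.
  assert (Hu1 : u <= 1) by (apply cube_le; lra).
  assert (Hs : 0 <= t*(1-t)) by nra.
  set (z := 2 * sqrt (t*(1-t))).
  assert (Hz : 0 <= z) by (unfold z; pose proof (sqrt_pos (t*(1-t))); lra).
  set (r := rpow z (1/3)).
  assert (Hr3 : r^3 = z) by (apply rpow_cube; lra).
  assert (Hr0 : 0 <= r) by apply rpow_nonneg.
  exists u, r. split; [lra|]. split; [auto|]. split; [auto|]. split.
  - replace ((r^2)^3) with ((r^3)*(r^3)) by ring. rewrite Hr3. unfold z.
    pose proof (sqrt_sqrt _ Hs). nra.
  - unfold ff. fold z. rewrite !rpow_43 by lra. reflexivity.
Qed.

Lemma ff_upper t : 1/2 <= t <= 1 -> ff t <= 22505/10000.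
Proof.
  intros Ht. destruct (ff_repr t ltac:(lra)) as (u & r & Hu & Hr & Hu3 & Hr6 & E).
  rewrite E. apply Rle_trans with (hh u); [|apply hh_bound; auto].
  set (y := r^2). assert (Hy : 0 <= y) by (unfold y; apply pow2_ge_0).
  assert (Hc : 3*kk*y^2 <= kk^3 + 2*y^3).
  { assert (0 <= (y-kk)^2*(2*y+kk)) by (apply Rmult_le_pos; [apply pow2_ge_0| unfold kk; lra]).
    nra. }
  assert (Hy3 : y^3 = 4*(u^3*(1-u^3))) by (unfold y; rewrite Hr6, Hu3; ring).
  replace (r^4) with (y^2) by (unfold y; ring).
  unfold hh.
  assert (y^2 <= kk^2/3 + 2/(3*kk)*y^3).
  { apply Rmult_le_reg_l with (3*kk); [unfold kk; lra|].
    replace (3*kk*(kk^2/3 + 2/(3*kk)*y^3)) with (kk^3 + 2*y^3) by (unfold kk; field). lra. }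
  replace (8/(3*kk)*u^3*(1-u^3)) with (2/(3*kk)*(4*(u^3*(1-u^3)))) by (unfold kk; field).
  rewrite <- Hy3. lra.
Qed.

Definition u0 := 9539/10000.

Lemma ff_lower : 22504/10000 <= ff (u0^3).
Proof.
  destruct (ff_repr (u0^3) ltac:(unfold u0; lra)) as (u & r & Hu & Hr & Hu3 & Hr6 & E).
  rewrite E.
  assert (u = u0).
  { apply Rle_antisym; apply cube_le; unfold u0 in *; lra. }
  subst u.
  assert (878083/1000000 <= r).
  { apply pow6_le; [lra|auto|]. replace (r^6) with ((r^2)^3) by ring. rewrite Hr6. unfold u0. lra. }
  assert ((878083/1000000)^4 <= r^4) by (apply pow_incr; lra).
  unfold u0 in *. lra.
Qed.

Lemma BH_ff t : BH_fun t = rpow (ff t) (3/4).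
Proof. reflexivity. Qed.

Lemma BH_nonneg t : 0 <= BH_fun t.
Proof. apply rpow_nonneg. Qed.

Lemma eval22 a u v : hpoly_eval 2 2 a (fun i => match i with O => u | _ => v end)
  = a [2%nat;0%nat] * u^2 + a [0%nat;2%nat] * v^2 + a [1%nat;1%nat] * u * v.
Proof. unfold hpoly_eval. simpl. ring. Qed.

Lemma eval22' a x : hpoly_eval 2 2 a x
  = a [2%nat;0%nat] * (x 0%nat)^2 + a [0%nat;2%nat] * (x 1%nat)^2 + a [1%nat;1%nat] * x 0%nat * x 1%nat.
Proof. unfold hpoly_eval. simpl. ring. Qed.

Lemma coef22 a : coef_norm 2 2 a = rpow (rpow (Rabs (a [0%nat;2%nat])) (4/3) +
   (rpow (Rabs (a [1%nat;1%nat])) (4/3) + (rpow (Rabs (a [2%nat;0%nat])) (4/3) + 0))) (3/4).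
Proof.
  unfold coef_norm. simpl mindices. cbn [fold_right].
  replace (2 * INR 2 / (INR 2 + 1)) with (4/3) by (simpl; field).
  replace ((INR 2 + 1) / (2 * INR 2)) with (3/4) by (simpl; field). reflexivity.
Qed.

Definition exa (t : R) (al : list nat) : R :=
  match al with
  | [2%nat;0%nat] => t
  | [0%nat;2%nat] => - t
  | [1%nat;1%nat] => 2 * sqrt (t*(1-t))
  | _ => 0
  end.

Lemma example t : 1/2 <= t <= 1 -> BH_ratios 2 2 (BH_fun t).
Proof.
  intros Ht. set (c := 2 * sqrt (t*(1-t))).
  assert (Hs : 0 <= t*(1-t)) by nra.
  assert (Hc0 : 0 <= c) by (unfold c; pose proof (sqrt_pos (t*(1-t))); lra).
  assert (Hc2 : c*c = 4*(t*(1-t))) by (unfold c; pose proof (sqrt_sqrt _ Hs); nra).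
  assert (Hc1 : c <= 2*t) by nra.
  exists (exa t). split.
  { exists [2%nat;0%nat]. split; [simpl; tauto|]. simpl. lra. }
  exists 1. split.
  - split.
    + intros r [x [Hx Hr]]. subst r. rewrite eval22'. simpl exa. fold c.
      pose proof (Hx 0%nat ltac:(lia)). pose proof (Hx 1%nat ltac:(lia)).
      set (p := x 0%nat) in *. set (q := x 1%nat) in *.
      assert (Hk : c*c/(4*t) = 1 - t) by (rewrite Hc2; field; lra).
      assert (E1 : p^2 - (t*p^2 + - t*q^2 + c*p*q) = t*(q - c*p/(2*t))^2).
      { replace (t*(q - c*p/(2*t))^2) with (t*q^2 - c*p*q + (c*c/(4*t))*p^2) by (field; lra).
        rewrite Hk. ring. }
      assert (E2 : q^2 + (t*p^2 + - t*q^2 + c*p*q) = t*(p + c*q/(2*t))^2).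
      { replace (t*(p + c*q/(2*t))^2) with (t*p^2 + c*p*q + (c*c/(4*t))*q^2) by (field; lra).
        rewrite Hk. ring. }
      assert (0 <= t*(q - c*p/(2*t))^2) by (apply Rmult_le_pos; [lra|apply pow2_ge_0]).
      assert (0 <= t*(p + c*q/(2*t))^2) by (apply Rmult_le_pos; [lra|apply pow2_ge_0]).
      apply Rabs_le. nra.
    + intros b Hb. apply Hb. exists (fun i => match i with O => 1 | _ => c/(2*t) end).
      split.
      * intros i Hi. destruct i as [|i]; [lra|].
        split; [apply Rle_trans with 0; [lra|]; apply Rmult_le_pos; [lra|left; apply Rinv_0_lt_compat; lra]|].
        apply Rmult_le_reg_r with (2*t); [lra|]. replace (c/(2*t)*(2*t)) with c by (field; lra). lra.
      * rewrite eval22. simpl exa. fold c.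
        replace (t * 1 ^ 2 + - t * (c / (2 * t)) ^ 2 + c * 1 * (c / (2 * t))) with 1.
        { rewrite Rabs_pos_eq; lra. }
        replace (t * 1 ^ 2 + - t * (c / (2 * t)) ^ 2 + c * 1 * (c / (2 * t))) with (t + c*c/(4*t)) by (field; lra).
        rewrite Hc2. field. lra.
  - rewrite coef22. simpl exa. fold c. unfold Rdiv at 1. rewrite Rinv_1, Rmult_1_r.
    rewrite BH_ff. unfold ff. fold c.
    rewrite Rabs_Ropp, !Rabs_pos_eq by lra. f_equal. ring.
Qed.

Theorem mainTheorem7 :
  exists L : R,
    is_lub (BH_ratios 2 2) L /\
    is_lub (fun r => exists t, 1/2 <= t <= 1 /\ r = BH_fun t) L /\
    (forall M, (forall n, is_upper_bound (BH_ratios n 2) M) -> L <= M) /\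
    18373/10000 < L < 18375/10000.
Proof.
  set (Sf := fun r => exists t, 1/2 <= t <= 1 /\ r = BH_fun t).
  assert (HB : forall t, 1/2 <= t <= 1 -> BH_fun t <= 183749/100000).
  { intros t Ht. left. apply pow4_lt; [apply BH_nonneg|lra|].
    rewrite BH_ff, rpow_34 by apply ff_nonneg.
    pose proof (ff_upper t Ht). pose proof (ff_nonneg t).
    assert (ff t ^3 <= (22505/10000)^3) by (apply pow_incr; lra). lra. }
  assert (Hbd : bound Sf). { exists (183749/100000). intros r [t [Ht ->]]. auto. }
  assert (Hne : exists r, Sf r). { exists (BH_fun 1). exists 1. split; [lra|auto]. }
  destruct (completeness Sf Hbd Hne) as [L HL].
  assert (HL1 : L <= 183749/100000). { apply HL. intros r [t [Ht ->]]. auto. }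
  assert (Hu0 : 1/2 <= u0^3 <= 1) by (unfold u0; lra).
  assert (HL2 : 18373/10000 < L).
  { apply Rlt_le_trans with (BH_fun (u0^3)); [|apply HL; exists (u0^3); auto].
    apply pow4_lt; [lra|apply BH_nonneg|].
    rewrite BH_ff, rpow_34 by apply ff_nonneg.
    pose proof ff_lower.
    assert ((22504/10000)^3 <= ff (u0^3) ^3) by (apply pow_incr; lra). lra. }
  set (M := rpow L (4/3)).
  assert (Hf : forall t, 1/2 <= t <= 1 -> ff t <= M).
  { intros t Ht. replace (ff t) with (rpow (BH_fun t) (4/3)).
    2:{ rewrite BH_ff. apply rpow_comp; [apply ff_nonneg|field]. }
    apply rpow_le; [lra|]. split; [apply BH_nonneg|]. apply HL. exists t; auto. }
  assert (HM : 2 <= M). { pose proof (Hf _ Hu0). pose proof ff_lower. lra. }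
  assert (HML : rpow M (3/4) = L) by (apply rpow_comp; [lra|field]).
  assert (Hrat : is_lub (BH_ratios 2 2) L).
  { split.
    - intros r [a [_ [N [HN Hr]]]]. subst r.
      assert (HN0 : 0 <= N).
      { apply Rle_trans with (Rabs (hpoly_eval 2 2 a (fun _ => 0))); [apply Rabs_pos|].
        apply HN. exists (fun _ => 0). split; [intros; lra|reflexivity]. }
      assert (Hc := core M (a [2%nat;0%nat]) (a [0%nat;2%nat]) (a [1%nat;1%nat]) N Hf HM).
      assert (Hc' : rpow (Rabs (a [2%nat;0%nat])) (4/3) + rpow (Rabs (a [0%nat;2%nat])) (4/3)
          + rpow (Rabs (a [1%nat;1%nat])) (4/3) <= M * rpow N (4/3)).
      { apply Hc. intros u v Hu Hv. apply HN.
        exists (fun i => match i with O => u | _ => v end). split.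
        - intros i _. destruct i; auto.
        - rewrite eval22. reflexivity. }
      assert (Hcn : coef_norm 2 2 a <= L * N).
      { rewrite coef22. apply Rle_trans with (rpow (M * rpow N (4/3)) (3/4)).
        - apply rpow_le; [lra|]. split; [|lra].
          pose proof (rpow_nonneg (Rabs (a [0%nat;2%nat])) (4/3)).
          pose proof (rpow_nonneg (Rabs (a [1%nat;1%nat])) (4/3)).
          pose proof (rpow_nonneg (Rabs (a [2%nat;0%nat])) (4/3)). lra.
        - rewrite rpow_mul by (lra || apply rpow_nonneg). rewrite HML.
          rewrite rpow_comp by (lra || field). lra. }
      destruct HN0 as [HN0|HN0].
      + apply Rmult_le_reg_r with N; [lra|]. unfold Rdiv. rewrite Rmult_assoc, Rinv_l by lra. lra.
      + subst N. unfold Rdiv. rewrite Rinv_0. lra.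
    - intros b Hb. apply HL. intros r [t [Ht ->]]. apply Hb. apply example; auto. }
  exists L. split; [exact Hrat|]. split; [exact HL|]. split.
  - intros M' HM'. apply Hrat. apply HM'.
  - lra.
Qed.
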